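(* Let $1<\beta\le2$ and set $\mathrm{ei}_\beta(y)=\mathrm{cpr}_\beta(y)-\tfrac12$ for $y\in[0,1]$. Then for all $0\le y<\beta/2$, $$[\mathcal P_\beta\,\mathrm{ei}_\beta](y)=\frac1\beta\,\mathrm{ei}_\beta(y).$$
   Context: $T_\beta(x)=\beta x$ for $0\le x<\tfrac12$, $T_\beta(x)=\beta(x-\tfrac12)$ for $\tfrac12\le x\le1$; $k_n(x)=0$ if $T_\beta^n(x)<\tfrac12$ and $1$ otherwise; $\mathrm{cpr}_\beta(y)=\sum_{n\ge0}k_n(y)2^{-n-1}$. For a function $f$ on $[0,1]$, the operator $\mathcal P_\beta$ is $[\mathcal P_\beta f](y)=\frac1\beta\left[f\!\left(\frac y\beta\right)+f\!\left(\frac y\beta+\frac12\right)\right]$, $0\le y\le\beta/2$. *)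

(* Defs.v *)
From Stdlib Require Import Reals Lra ClassicalEpsilon.
Open Scope R_scope.

Definition T (beta x : R) : R :=
  if Rlt_dec x (1/2) then beta * x else beta * (x - 1/2).

Fixpoint Titer (beta : R) (n : nat) (x : R) : R :=
  match n with
  | O => x
  | S m => T beta (Titer beta m x)
  end.

Definition kdig (beta : R) (n : nat) (x : R) : R :=
  if Rlt_dec (Titer beta n x) (1/2) then 0 else 1.

(* the value of a convergent series (chosen classically; default 0) *)
Definition series_value (f : nat -> R) : R :=
  match excluded_middle_informative (exists l, infinite_sum f l) with
  | left H => proj1_sig (constructive_indefinite_description _ H)
  | right _ => 0
  end.

Definition cpr (beta y : R) : R :=
  series_value (fun n => kdig beta n y / 2 ^ (S n)).

Definition ei (beta y : R) : R := cpr beta y - 1/2.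

Definition Pop (beta : R) (f : R -> R) (y : R) : R :=
  / beta * (f (y / beta) + f (y / beta + 1/2)).

(* Main.v *)
Require Import Defs.
From Stdlib Require Import Reals Lra Lia ClassicalEpsilon.
Open Scope R_scope.

Lemma geo_sum N : sum_f_R0 (fun n => / 2 ^ S n) N = 1 - / 2 ^ S N.
Proof.
  induction N as [|N IH]; [simpl; field|]. rewrite tech5.
  rewrite IH. simpl. field. apply pow_nonzero; lra.
Qed.

Lemma geo_cv : {l | Un_cv (fun N => sum_f_R0 (fun n => / 2 ^ S n) N) l}.
Proof.
  exists 1. intros eps Heps.
  destruct (cv_pow_half 1 eps Heps) as [N HN].
  exists N. intros n Hn. specialize (HN n Hn).
  unfold Rdist in *. rewrite geo_sum.
  assert (H2 : 0 < 2 ^ n) by (apply pow_lt; lra).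
  simpl. rewrite Rminus_0_r in HN.
  rewrite Rabs_right in HN by (apply Rle_ge; unfold Rdiv; apply Rmult_le_pos; [lra|left; apply Rinv_0_lt_compat; lra]).
  replace (1 - / (2 * 2 ^ n) - 1) with (- / (2 * 2^n)) by ring.
  rewrite Rabs_Ropp, Rabs_right.
  - apply Rle_lt_trans with (1 / 2 ^ n); auto.
    unfold Rdiv. rewrite Rmult_1_l. apply Rinv_le_contravar; lra.
  - apply Rle_ge; left; apply Rinv_0_lt_compat; lra.
Qed.

Lemma kdig01 b n x : 0 <= kdig b n x <= 1.
Proof. unfold kdig; destruct Rlt_dec; lra. Qed.

Lemma cpr_conv b y : exists l, infinite_sum (fun n => kdig b n y / 2 ^ S n) l.
Proof.
  destruct (Rseries_CV_comp (fun n => kdig b n y / 2 ^ S n) (fun n => / 2 ^ S n))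
    as [l Hl].
  - intros n. pose proof (kdig01 b n y).
    assert (0 < / 2 ^ S n) by (apply Rinv_0_lt_compat, pow_lt; lra).
    unfold Rdiv. split; [apply Rmult_le_pos; lra|].
    rewrite <- (Rmult_1_l (/ 2 ^ S n)) at 2. apply Rmult_le_compat_r; lra.
  - exact geo_cv.
  - exists l. exact Hl.
Qed.

Lemma sv_eq f l : infinite_sum f l -> series_value f = l.
Proof.
  intros H. unfold series_value.
  destruct excluded_middle_informative as [e|n]; [|exfalso; apply n; eauto].
  destruct constructive_indefinite_description as [l' Hl']. simpl.
  exact (UL_sequence _ _ _ Hl' H).
Qed.

Lemma Titer_S b n x : Titer b (S n) x = Titer b n (T b x).
Proof.
  induction n; simpl; auto. simpl in IHn. rewrite IHn. reflexivity.
Qed.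

Lemma shift_sum (a bb : nat -> R) c l :
  bb 0%nat = c -> (forall n, bb (S n) = a n / 2) ->
  infinite_sum a l -> infinite_sum bb (c + l / 2).
Proof.
  intros H0 HS H eps Heps.
  assert (Hs : forall n, sum_f_R0 bb (S n) = c + sum_f_R0 a n / 2).
  { induction n; [simpl; rewrite HS, H0; lra|].
    rewrite tech5, IHn, tech5, HS. lra. }
  destruct (H eps Heps) as [N HN]. exists (S N). intros n Hn.
  destruct n as [|n]; [lia|].
  rewrite Hs. unfold Rdist in *.
  assert (Hn2 : (n >= N)%nat) by (unfold ge in *; lia). specialize (HN n Hn2).
  replace (c + sum_f_R0 a n / 2 - (c + l / 2)) with ((sum_f_R0 a n - l) / 2) by field.
  unfold Rdiv. rewrite Rabs_mult, (Rabs_right (/ 2)) by lra.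
  pose proof (Rabs_pos (sum_f_R0 a n - l)). lra.
Qed.

Theorem mainTheorem6 (beta y : R) (hb1 : 1 < beta) (hb2 : beta <= 2)
  (hy0 : 0 <= y) (hy1 : y < beta / 2) :
  Pop beta (ei beta) y = / beta * ei beta y.
Proof.
  destruct (cpr_conv beta y) as [l Hl].
  assert (Hc : cpr beta y = l) by (apply sv_eq; exact Hl).
  set (x1 := y / beta). set (x2 := y / beta + 1/2).
  assert (Hx1a : 0 <= x1) by (unfold x1, Rdiv; apply Rmult_le_pos; [lra|left; apply Rinv_0_lt_compat; lra]).
  assert (Hx1b : x1 < 1/2).
  { unfold x1. apply (Rmult_lt_reg_l beta); [lra|]. field_simplify; lra. }
  assert (T1 : T beta x1 = y).
  { unfold T. destruct Rlt_dec; [|lra]. unfold x1; field; lra. }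
  assert (T2 : T beta x2 = y).
  { unfold T. destruct Rlt_dec; [unfold x2, x1 in *; lra|]. unfold x2; field; lra. }
  assert (C1 : cpr beta x1 = 0 + l / 2).
  { apply sv_eq. apply (shift_sum (fun n => kdig beta n y / 2 ^ S n)); auto.
    - unfold kdig; simpl. destruct Rlt_dec; [field|lra].
    - intros n. unfold kdig. rewrite Titer_S, T1. simpl. field.
      apply pow_nonzero; lra. }
  assert (C2 : cpr beta x2 = 1 / 2 + l / 2).
  { apply sv_eq. apply (shift_sum (fun n => kdig beta n y / 2 ^ S n)); auto.
    - unfold kdig; simpl. destruct Rlt_dec; [unfold x2, x1 in *; lra|field].
    - intros n. unfold kdig. rewrite Titer_S, T2. simpl. field.
      apply pow_nonzero; lra. }
  unfold Pop, ei. replace (y / beta + 1/2) with x2 by reflexivity. replace (y / beta) with x1 by reflexivity. rewrite C1, C2, Hc. field. lra.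
Qed.
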